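(* Assume the setting and Algorithm 1 described in the context, with $|Q|\ge2$. Take parameters $P=\Theta(\frac{M^2}{\varepsilon_1^2}\log|Q|)$, $R=32M/\varepsilon_1$ and $T=\Theta(\frac{R}{\varepsilon_2}\log|Q|)$, with suitable absolute constants. Then with probability at least $7/8$ the distribution $\hat q$ returned by Algorithm 1 satisfies $\mathrm{Loss}(\hat q)\le\mathrm{Loss}(q^* )+\varepsilon_1$.
   Context: Setting. $X$ is a countable set and $p$ is a probability distribution on $X$. For a distribution $q$ on $X$, $q_x$ is the mass of $x$, $\mathrm{supp}(q)=\{x:q_x>0\}$, and $q(A)=\sum_{x\in A}q_x$. An invalidity function $\mathrm{Inv}:X\to\{0,1\}$ is given with $\mathrm{Inv}(x)=0$ for all $x\in\mathrm{supp}(p)$. For a distribution $q$, $\mathrm{Inv}(q)=\mathbb{E}_{x\sim q}[\mathrm{Inv}(x)]$. Fix $M>0$ and a monotone non-increasing function $L:[0,1]\to[0,M]$, and set $\mathrm{Loss}(q)=\mathbb{E}_{x\sim p}[L(q_x)]$. The learner may draw i.i.d. samples from $p$ and may query $\mathrm{Inv}(x)$ at any point $x$. $Q$ is a finite family of probability distributions on $X$ containing at least one $q$ with $\mathrm{Inv}(q)=0$. $q^*$ denotes a minimizer of $\mathrm{Loss}(q)$ over $\{q\in Q:\mathrm{Inv}(q)=0\}$. Oracle. For a finite multiset $X_P$ and a finite set $X_N\subseteq X$, $\mathrm{Oracle}(X_P,X_N)$ returns some $q\in Q$ minimizing $\frac1{|X_P|}\sum_{x\in X_P}L(q_x)$ among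 all $q\in Q$ with $\mathrm{supp}(q)\cap X_N=\emptyset$. Algorithm 1 (parameters $P,R,T$): (1) Draw a multiset $X_P$ of $P$ i.i.d. samples from $p$. Set $X_N=\emptyset$. (2) For $i=1,\dots,R$: let $q^i=\mathrm{Oracle}(X_P,X_N)$. Draw $T$ i.i.d. samples from $q^i$ and query the invalidity of each. If none is invalid, output $q^i$ and stop. Otherwise add all invalid ones to $X_N$. (3) If no output has been produced after $R$ rounds, choose $i$ uniformly from $\{1,\dots,R\}$ and let $A^i=\{x:\exists j>i,\ x\in\mathrm{supp}(q^j)\}$. Output the distribution $\hat q$ that draws $x\sim q^i$ and returns $x$ if $x\in A^i$, and otherwise returns a fixed point $x^*$ with $\mathrm{Inv}(x^* )=0$. *)

(* Defs.v *)
(* classical reals. The countable set X is modelled by nat. *)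
From Stdlib Require Import Reals Lra List Permutation Classical ClassicalEpsilon.
Import ListNotations.
Open Scope R_scope.

(* value of a (convergent) series; arbitrary if it does not converge.
   All series used below have nonnegative bounded terms, hence converge. *)
Definition series (u : nat -> R) : R :=
  epsilon (inhabits 0) (fun l => infinite_sum u l).

Definition isDist (d : nat -> R) : Prop :=
  (forall x, 0 <= d x) /\ infinite_sum d 1.

Definition indic (b : bool) : R := if b then 1 else 0.

Definition InvQ (Inv : nat -> bool) (q : nat -> R) : R :=
  series (fun x => q x * indic (Inv x)).

Definition Loss (p : nat -> R) (L : R -> R) (q : nat -> R) : R :=
  series (fun x => p x * L (q x)).

Definition nceil (x : R) : nat := Z.to_nat (- Int_part (- x)).

Definition emp_loss (L : R -> R) (XP : list nat) (q : nat -> R) : R :=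
  / INR (length XP) * fold_right (fun x acc => L (q x) + acc) 0 XP.

Definition feasible (Qs : list (nat -> R)) (XN : list nat) (q : nat -> R) : Prop :=
  In q Qs /\ forall x, In x XN -> ~ (0 < q x).

Definition is_oracle (L : R -> R) (Qs : list (nat -> R))
    (orc : list nat -> list nat -> (nat -> R)) : Prop :=
  (forall XP XN, (exists q, feasible Qs XN q) ->
     feasible Qs XN (orc XP XN) /\
     forall q, feasible Qs XN q -> emp_loss L XP (orc XP XN) <= emp_loss L XP q)
  /\
  (forall XP XP' XN XN', Permutation XP XP' -> (forall x, In x XN <-> In x XN') ->
     orc XP XN = orc XP' XN').

Inductive prog (A : Type) : Type :=
| Ret : A -> prog A
| Draw : (nat -> R) -> (nat -> prog A) -> prog A.
Arguments Ret {A} _.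
Arguments Draw {A} _ _.

(* PrEv E t v : the probability that program t returns an outcome satisfying E is v *)
Inductive PrEv {A : Type} (E : A -> Prop) : prog A -> R -> Prop :=
| PrRet1 : forall a, E a -> PrEv E (Ret a) 1
| PrRet0 : forall a, ~ E a -> PrEv E (Ret a) 0
| PrDraw : forall d k (v : nat -> R) l,
    (forall x, PrEv E (k x) (v x)) ->
    infinite_sum (fun x => d x * v x) l ->
    PrEv E (Draw d k) l.

Fixpoint draws {A : Type} (d : nat -> R) (n : nat) (k : list nat -> prog A) : prog A :=
  match n with
  | O => k []
  | S n' => Draw d (fun x => draws d n' (fun s => k (x :: s)))
  end.

Definition unif (n : nat) : nat -> R :=
  fun i => if Nat.ltb i n then / INR n else 0.

(* hist = [q^1; ...; q^R] (0-based); A^i = {x : exists j > i, x in supp(q^j)} *)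
Definition inA (hist : list (nat -> R)) (i x : nat) : Prop :=
  exists j, (i < j < length hist)%nat /\ 0 < nth j hist (fun _ => 0) x.

(* hat q : draw x ~ q^i, return x if x in A^i, else return xstar *)
Definition hatq (hist : list (nat -> R)) (xstar : nat) (i : nat) : nat -> R :=
  fun x =>
    let qi := nth i hist (fun _ => 0) in
    (if excluded_middle_informative (inA hist i x) then qi x else 0)
    + (if Nat.eq_dec x xstar then
         series (fun y => if excluded_middle_informative (inA hist i y) then 0 else qi y)
       else 0).

Fixpoint rounds (Inv : nat -> bool) (orc : list nat -> list nat -> (nat -> R))
    (XP : list nat) (xstar Rn T : nat) (fuel : nat)
    (XN : list nat) (hist : list (nat -> R)) : prog (nat -> R) :=
  match fuel with
  | O => Draw (unif Rn) (fun i => Ret (hatq hist xstar i))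
  | S f =>
      let q := orc XP XN in
      draws q T (fun s =>
        if forallb (fun x => negb (Inv x)) s then Ret q
        else rounds Inv orc XP xstar Rn T f (XN ++ filter Inv s) (hist ++ [q]))
  end.

Definition algorithm1 (p : nat -> R) (Inv : nat -> bool)
    (orc : list nat -> list nat -> (nat -> R)) (xstar P Rn T : nat) : prog (nat -> R) :=
  draws p P (fun XP => rounds Inv orc XP xstar Rn T Rn [] []).

(* Main.v *)
Require Import Defs.
From Stdlib Require Import Reals Lra List Permutation Classical ClassicalEpsilon.
From Coquelicot Require Import Coquelicot.
From Stdlib Require Import Lia ZArith.
Open Scope R_scope.



Lemma series_eq u l : is_series u l -> series u = l.
Proof.
  intros H. unfold series.
  assert (Hs : infinite_sum u (epsilon (inhabits 0) (fun l => infinite_sum u l))).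
  { apply epsilon_spec. exists l. now apply is_series_Reals. }
  apply is_series_Reals in Hs.
  rewrite <- (is_series_unique _ _ H). symmetry. now apply is_series_unique.
Qed.

Lemma series_Series u : ex_series u -> series u = Series u.
Proof. intros H. apply series_eq. now apply Series_correct. Qed.

Lemma dist_ex d : isDist d -> ex_series d.
Proof. intros [_ H]. exists 1. now apply is_series_Reals. Qed.

Lemma dist_Series d : isDist d -> Series d = 1.
Proof. intros [_ H]. apply is_series_unique. now apply is_series_Reals. Qed.

Lemma ex_le_R (a b : nat -> R) : (forall n, Rabs (a n) <= b n) -> ex_series b -> ex_series a.
Proof. intros H Hb. apply (@ex_series_le R_AbsRing R_CompleteNormedModule a b); auto. Qed.

Lemma ex_scal (c : R) (a : nat -> R) : ex_series a -> ex_series (fun n => c * a n).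
Proof. intros [l H]. exists (c * l). now apply (@is_series_scal_l R_AbsRing R_NormedModule c a l). Qed.

Lemma ex_plus (a b : nat -> R) : ex_series a -> ex_series b -> ex_series (fun n => a n + b n).
Proof. intros [l H] [l' H']. exists (l + l'). now apply (@is_series_plus R_AbsRing R_NormedModule a b l l'). Qed.

Lemma ex_bnd d g B : isDist d -> (forall x, Rabs (g x) <= B) ->
  ex_series (fun x => d x * g x).
Proof.
  intros Hd Hg. apply (ex_le_R _ (fun x => B * d x)).
  - intros n. rewrite Rabs_mult. destruct Hd as [Hd0 _].
    rewrite (Rabs_right (d n)) by (apply Rle_ge, Hd0).
    rewrite Rmult_comm. apply Rmult_le_compat_r; auto.
  - apply ex_scal. now apply dist_ex.
Qed.

Fixpoint sumR (f : nat -> R) (n : nat) : R :=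
  match n with O => 0 | S n => sumR f n + f n end.

Lemma sum_f_sumR u n : sum_f_R0 u n = sumR u (S n).
Proof. induction n; simpl in *; [lra|]. rewrite IHn. simpl. lra. Qed.

Lemma sumR_stable u N : (forall n, (N <= n)%nat -> u n = 0) ->
  forall n, (N <= n)%nat -> sumR u n = sumR u N.
Proof.
  intros H n Hn. induction Hn; auto. simpl. rewrite IHHn, H by lia. lra.
Qed.

Lemma is_series_finite u N : (forall n, (N <= n)%nat -> u n = 0) -> is_series u (sumR u N).
Proof.
  intros H. apply is_series_Reals. intros eps Heps. exists N. intros n Hn.
  rewrite sum_f_sumR, (sumR_stable u N H) by lia. unfold R_dist.
  rewrite Rminus_diag, Rabs_R0. lra.
Qed.

Lemma Series_0 : Series (fun _ => 0) = 0.
Proof.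
  apply is_series_unique.
  pose proof (is_series_finite (fun _ => 0) 0 (fun _ _ => eq_refl)) as H; simpl in H; exact H.
Qed.

Lemma Series_le' (a b : nat -> R) : ex_series a -> ex_series b ->
  (forall n, a n <= b n) -> Series a <= Series b.
Proof.
  intros Ha Hb H.
  assert (0 <= Series (fun n => b n - a n)).
  { rewrite <- Series_0. apply Series_le.
    - intros n. specialize (H n). lra.
    - apply ex_plus; auto. destruct Ha as [l Hl]. exists (-l).
      now apply (@is_series_opp R_AbsRing R_NormedModule). }
  rewrite Series_minus in H0; auto. lra.
Qed.

Lemma Series_single k c : Series (fun n => if Nat.eq_dec n k then c else 0) = c.
Proof.
  apply is_series_unique.
  assert (E : sumR (fun n => if Nat.eq_dec n k then c else 0) (S k) = c).
  { simpl. destruct (Nat.eq_dec k k); [|congruence].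
    assert (forall m, (m <= k)%nat -> sumR (fun n => if Nat.eq_dec n k then c else 0) m = 0).
    { induction m; simpl; auto. intros. rewrite IHm by lia. destruct (Nat.eq_dec m k); [lia|lra]. }
    rewrite H by lia. lra. }
  pose proof (is_series_finite (fun n => if Nat.eq_dec n k then c else 0) (S k)) as H.
  rewrite E in H. apply H. intros n Hn. destruct (Nat.eq_dec n k); [lia|auto].
Qed.

Lemma term_le_Series (a : nat -> R) k : (forall n, 0 <= a n) -> ex_series a -> a k <= Series a.
Proof.
  intros H Ha. rewrite <- (Series_single k (a k)) at 1. apply Series_le; auto.
  intros n. destruct (Nat.eq_dec n k); subst; split; auto; lra.
Qed.

Lemma dist_le1 d x : isDist d -> 0 <= d x <= 1.
Proof.
  intros Hd. pose proof Hd as [H0 _]. split; auto.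
  rewrite <- (dist_Series d Hd). apply term_le_Series; auto. now apply dist_ex.
Qed.

Lemma Series_dist_const d c : isDist d -> Series (fun x => d x * c) = c.
Proof.
  intros Hd. rewrite (Series_ext _ (fun x => c * d x)) by (intros; ring).
  rewrite Series_scal_l, dist_Series by auto. ring.
Qed.

Lemma Series_dist_bound d g a b : isDist d -> (forall x, a <= g x <= b) ->
  a <= Series (fun x => d x * g x) <= b.
Proof.
  intros Hd Hg. pose proof Hd as [H0 _].
  assert (Hex : ex_series (fun x => d x * g x)).
  { apply (ex_bnd d g (Rabs a + Rabs b)); auto. intros x. specialize (Hg x).
    unfold Rabs; repeat destruct Rcase_abs; lra. }
  split.
  - rewrite <- (Series_dist_const d a Hd) at 1. apply Series_le'; auto.
    + apply (ex_bnd d (fun _ => a) (Rabs a)); auto. intros; lra.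
    + intros x. apply Rmult_le_compat_l; auto. apply Hg.
  - rewrite <- (Series_dist_const d b Hd). apply Series_le'; auto.
    + apply (ex_bnd d (fun _ => b) (Rabs b)); auto. intros; lra.
    + intros x. apply Rmult_le_compat_l; auto. apply Hg.
Qed.

Definition LB {A} (E : A -> Prop) (t : prog A) (a : R) : Prop :=
  exists v, PrEv E t v /\ a <= v /\ 0 <= v <= 1.

Lemma LB_mono {A} (E : A -> Prop) t a b : LB E t a -> b <= a -> LB E t b.
Proof. intros [v [H1 [H2 H3]]] Hb. exists v. repeat split; auto; lra. Qed.

Lemma LB_ret1 {A} (E : A -> Prop) r : E r -> LB E (Ret r) 1.
Proof. intros H. exists 1. repeat split; try lra. now constructor. Qed.

Lemma LB_ret0 {A} (E : A -> Prop) r : LB E (Ret r) 0.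
Proof.
  destruct (classic (E r)).
  - exists 1. repeat split; try lra. now constructor.
  - exists 0. repeat split; try lra. now constructor.
Qed.

Lemma LB_draw {A} (E : A -> Prop) d k a : isDist d ->
  (forall x, LB E (k x) (a x)) -> (forall x, 0 <= a x) ->
  LB E (Draw d k) (Series (fun x => d x * a x)).
Proof.
  intros Hd H Ha. pose proof Hd as [H0 _].
  set (v := fun x => proj1_sig (constructive_indefinite_description _ (H x))).
  assert (Hv : forall x, PrEv E (k x) (v x) /\ a x <= v x /\ 0 <= v x <= 1).
  { intros x. unfold v. destruct (constructive_indefinite_description _ (H x)). auto. }
  assert (Hex : ex_series (fun x => d x * v x)).
  { apply (ex_bnd d v 1); auto. intros x. destruct (Hv x) as [_ [_ Hb]].
    rewrite Rabs_right; lra. }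
  exists (Series (fun x => d x * v x)). split; [|split].
  - apply (PrDraw E d k v). intros x; apply Hv. apply is_series_Reals. now apply Series_correct.
  - apply Series_le; auto. intros n. destruct (Hv n) as [_ [Hl _]]. split.
    + apply Rmult_le_pos; auto.
    + apply Rmult_le_compat_l; auto.
  - apply Series_dist_bound; auto. intros x. apply Hv.
Qed.

Lemma LB_draw_const {A} (E : A -> Prop) d k c : isDist d ->
  (forall x, LB E (k x) c) -> 0 <= c -> LB E (Draw d k) c.
Proof.
  intros Hd H Hc. rewrite <- (Series_dist_const d c Hd). apply LB_draw; auto.
Qed.

Lemma LB_draws_const {A} (E : A -> Prop) d n k c : isDist d ->
  (forall s, LB E (k s) c) -> 0 <= c -> LB E (draws d n k) c.
Proof.
  intros Hd. revert k. induction n; intros k H Hc; simpl; auto.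
  apply LB_draw_const; auto.
Qed.

Fixpoint Eds (d : nat -> R) (n : nat) (f : list nat -> R) : R :=
  match n with
  | O => f nil
  | S n => Series (fun x => d x * Eds d n (fun s => f (x :: s)))
  end.

Definition bndB (n : nat) (f : list nat -> R) (B : R) : Prop :=
  forall s, length s = n -> Rabs (f s) <= B.

Lemma bndB_cons n f B x : bndB (S n) f B -> bndB n (fun s => f (x :: s)) B.
Proof. intros H s Hs. apply H. simpl. now rewrite Hs. Qed.

Lemma Eds_abs d n f B : isDist d -> bndB n f B -> Rabs (Eds d n f) <= B.
Proof.
  intros Hd. revert f. induction n; intros f Hf; simpl.
  - now apply Hf.
  - assert (H : -B <= Series (fun x => d x * Eds d n (fun s => f (x :: s))) <= B).
    { apply Series_dist_bound; auto. intros x.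
      specialize (IHn _ (bndB_cons n f B x Hf)). apply Rabs_le_between. auto. }
    apply Rabs_le; lra.
Qed.

Lemma Eds_ex d n f B : isDist d -> bndB (S n) f B ->
  ex_series (fun x => d x * Eds d n (fun s => f (x :: s))).
Proof.
  intros Hd Hf. apply (ex_bnd d _ B); auto. intros x.
  apply Eds_abs; auto. now apply bndB_cons.
Qed.

Lemma Eds_le d n f g B B' : isDist d -> bndB n f B -> bndB n g B' ->
  (forall s, length s = n -> f s <= g s) -> Eds d n f <= Eds d n g.
Proof.
  intros Hd. revert f g. induction n; intros f g Hf Hg H; simpl.
  - now apply H.
  - pose proof Hd as [H0 _]. apply Series_le'.
    + now apply (Eds_ex d n f B).
    + now apply (Eds_ex d n g B').
    + intros x. apply Rmult_le_compat_l; auto.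
      apply IHn; try now apply bndB_cons.
      intros s Hs. apply H. simpl; now rewrite Hs.
Qed.

Lemma Eds_scal d n f c : Eds d n (fun s => c * f s) = c * Eds d n f.
Proof.
  revert f. induction n; intros f; simpl; auto.
  rewrite <- Series_scal_l. apply Series_ext. intros x.
  rewrite (IHn (fun s => f (x :: s))). ring.
Qed.

Lemma Eds_const d n c : isDist d -> Eds d n (fun _ => c) = c.
Proof.
  intros Hd. induction n; simpl; auto. rewrite IHn. now apply Series_dist_const.
Qed.

Lemma Eds_plus d n f g B B' : isDist d -> bndB n f B -> bndB n g B' ->
  Eds d n (fun s => f s + g s) = Eds d n f + Eds d n g.
Proof.
  intros Hd. revert f g. induction n; intros f g Hf Hg; simpl; auto.
  rewrite <- Series_plus.
  - apply Series_ext. intros x. rewrite (IHn (fun s => f (x :: s)) (fun s => g (x :: s)));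
    try now apply bndB_cons. ring.
  - now apply (Eds_ex d n f B).
  - now apply (Eds_ex d n g B').
Qed.

Definition prodL (g : nat -> R) (s : list nat) : R :=
  fold_right (fun x acc => g x * acc) 1 s.

Lemma Eds_prod d n g : Eds d n (prodL g) = (Series (fun x => d x * g x)) ^ n.
Proof.
  induction n; simpl; auto.
  rewrite (Series_ext _ (fun x => (Series (fun x => d x * g x)) ^ n * (d x * g x))).
  - rewrite Series_scal_l. ring.
  - intros x. change (fun s => prodL g (x :: s)) with (fun s => g x * prodL g s).
    rewrite (Eds_scal d n (prodL g) (g x)). rewrite IHn. ring.
Qed.

Lemma LB_draws {A} (E : A -> Prop) d n k f : isDist d ->
  (forall s, length s = n -> LB E (k s) (f s)) -> (forall s, length s = n -> 0 <= f s) ->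
  LB E (draws d n k) (Eds d n f).
Proof.
  intros Hd. revert k f. induction n; intros k f H Hf; simpl.
  - now apply H.
  - apply LB_draw; auto.
    + intros x. apply IHn.
      * intros s Hs. apply H. simpl; now rewrite Hs.
      * intros s Hs. apply Hf. simpl; now rewrite Hs.
    + intros x. rewrite <- (Eds_const d n 0 Hd). apply (Eds_le d n _ _ 0 1); auto.
      * intros s _. rewrite Rabs_R0; lra.
      * intros s Hs. assert (Hl : length (x :: s) = S n) by (simpl; now rewrite Hs).
        destruct (H _ Hl) as [v [_ [Hv Hv1]]]. specialize (Hf _ Hl).
        rewrite Rabs_right; lra.
      * intros s Hs. apply Hf. simpl; now rewrite Hs.
Qed.

Lemma exp_le' x y : x <= y -> exp x <= exp y.
Proof. intros [H|H]. left; now apply exp_increasing. subst; lra. Qed.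

Lemma exp_pow' a n : exp a ^ n = exp (INR n * a).
Proof.
  induction n. simpl. rewrite Rmult_0_l, exp_0; auto.
  rewrite S_INR. simpl pow. rewrite IHn, <- exp_plus. f_equal. ring.
Qed.

Definition sumL (g : nat -> R) (s : list nat) : R :=
  fold_right (fun x acc => g x + acc) 0 s.

Lemma prodL_exp c Z s : prodL (fun x => exp (c * Z x)) s = exp (c * sumL Z s).
Proof.
  induction s; simpl. rewrite Rmult_0_r, exp_0; auto.
  unfold prodL in *. simpl. rewrite IHs, <- exp_plus. f_equal. ring.
Qed.

Lemma sumL_le Z M s : (forall x, Z x <= M) -> sumL Z s <= INR (length s) * M.
Proof.
  intros H. induction s. simpl. lra. unfold sumL in *. cbn [length fold_right]. rewrite S_INR.
  specialize (H a). lra.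
Qed.

Lemma exp_quad u : Rabs u <= 1/2 -> exp u <= 1 + u + 2 * u ^ 2.
Proof.
  intros Hu. apply Rabs_le_between in Hu.
  pose proof (exp_ineq1_le (- u)) as H1.
  assert (H2 : exp u * exp (- u) = 1) by (rewrite <- exp_plus; replace (u + - u) with 0 by ring; apply exp_0).
  pose proof (exp_pos u). pose proof (exp_pos (-u)).
  assert (H3 : exp u * (1 - u) <= 1) by nra.
  assert (H4 : 1 <= (1 - u) * (1 + u + 2 * u ^ 2)) by nra.
  nra.
Qed.

Lemma mgf p Z M lam : isDist p -> (forall x, Rabs (Z x) <= M) -> 0 < lam -> lam * M <= 1/2 ->
  Series (fun x => p x * Z x) <= 0 ->
  Series (fun x => p x * exp (lam * Z x)) <= exp (2 * lam ^ 2 * M ^ 2).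
Proof.
  intros Hp HZ Hl HlM HS. pose proof Hp as [H0 _].
  assert (HM : 0 <= M) by (pose proof (HZ 0%nat); pose proof (Rabs_pos (Z 0%nat)); lra).
  apply Rle_trans with (Series (fun x => p x * (1 + 2 * lam ^ 2 * M ^ 2) + lam * (p x * Z x))).
  - apply Series_le'.
    + apply (ex_bnd p _ (exp (lam * M))); auto. intros x. rewrite Rabs_right by (apply Rle_ge, Rlt_le, exp_pos).
      apply exp_le'. apply Rmult_le_compat_l; [lra|]. specialize (HZ x). apply Rabs_le_between in HZ; lra.
    + apply ex_plus. apply (ex_bnd p (fun _ => 1 + 2 * lam ^ 2 * M ^ 2) (Rabs (1 + 2 * lam ^ 2 * M ^ 2))); auto; intros; lra.
      apply ex_scal. apply (ex_bnd p _ M); auto.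
    + intros x. specialize (HZ x).
      assert (Hu : Rabs (lam * Z x) <= 1/2).
      { rewrite Rabs_mult, (Rabs_right lam) by lra.
        apply Rle_trans with (lam * M); auto. apply Rmult_le_compat_l; lra. }
      apply Rabs_le_between in HZ.
      pose proof (exp_quad _ Hu). specialize (H0 x).
      assert (Hq : (lam * Z x) ^ 2 <= lam ^ 2 * M ^ 2).
      { rewrite Rpow_mult_distr. apply Rmult_le_compat_l. nra. nra. }
      nra.
  - rewrite Series_plus.
    + rewrite Series_scal_l. rewrite (Series_ext _ (fun x => (1 + 2 * lam ^ 2 * M ^ 2) * p x)) by (intros; ring).
      rewrite Series_scal_l, dist_Series by auto.
      pose proof (exp_ineq1_le (2 * lam ^ 2 * M ^ 2)). nra.
    + apply (ex_bnd p _ (Rabs (1 + 2 * lam ^ 2 * M ^ 2))); auto. intros; lra.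
    + apply ex_scal. apply (ex_bnd p _ M); auto.
Qed.

Definition ind (P : Prop) : R := if excluded_middle_informative P then 1 else 0.

Lemma chernoff p Z M t n : isDist p -> (forall x, Rabs (Z x) <= M) -> 0 < M -> 0 < t ->
  Series (fun x => p x * Z x) <= 0 ->
  Eds p n (fun s => ind (INR n * t < sumL Z s)) <= exp (- INR n * t ^ 2 / (8 * M ^ 2)).
Proof.
  intros Hp HZ HM Ht HS.
  assert (HZu : forall x, Z x <= M) by (intros x; specialize (HZ x); apply Rabs_le_between in HZ; lra).
  assert (Hbi : bndB n (fun s => ind (INR n * t < sumL Z s)) 1).
  { intros s _. unfold ind. destruct excluded_middle_informative; rewrite ?Rabs_R1, ?Rabs_R0; lra. }
  pose proof (pos_INR n) as Hn.
  destruct (Rle_lt_dec M t) as [HMt|HMt].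
  - apply Rle_trans with 0; [|left; apply exp_pos].
    rewrite <- (Eds_const p n 0 Hp). apply (Eds_le p n _ _ 1 0); auto.
    + intros s _. rewrite Rabs_R0; lra.
    + intros s Hs. unfold ind. destruct excluded_middle_informative; [|lra].
      exfalso. pose proof (sumL_le Z M s HZu). rewrite Hs in H.
      assert (INR n * M <= INR n * t) by (apply Rmult_le_compat_l; lra). lra.
  - set (lam := t / (4 * M ^ 2)).
    assert (Hl : 0 < lam) by (unfold lam; apply Rdiv_lt_0_compat; nra).
    assert (HlM : lam * M <= 1/2).
    { unfold lam. replace (t / (4 * M ^ 2) * M) with (t / (4 * M)) by (field; lra).
      apply Rmult_le_reg_r with (4 * M); [lra|]. unfold Rdiv. rewrite Rmult_assoc, Rinv_l by lra. lra. }
    apply Rle_trans with (Eds p n (fun s => exp (- lam * INR n * t) * prodL (fun x => exp (lam * Z x)) s)).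
    + apply (Eds_le p n _ _ 1 (exp (- lam * INR n * t) * exp (lam * INR n * M))); auto.
      * intros s Hs. rewrite prodL_exp, <- exp_plus.
        rewrite Rabs_right by (apply Rle_ge, Rlt_le, exp_pos).
        rewrite <- exp_plus. apply exp_le'. pose proof (sumL_le Z M s HZu). rewrite Hs in H. nra.
      * intros s Hs. rewrite prodL_exp, <- exp_plus. unfold ind.
        destruct excluded_middle_informative.
        -- rewrite <- exp_0. apply exp_le'. nra.
        -- left; apply exp_pos.
    + rewrite Eds_scal, Eds_prod.
      apply Rle_trans with (exp (- lam * INR n * t) * exp (2 * lam ^ 2 * M ^ 2) ^ n).
      * apply Rmult_le_compat_l; [left; apply exp_pos|]. apply pow_incr. split.
        -- apply (Series_dist_bound p _ 0 (exp (lam * M))); auto. intros x; split; [left; apply exp_pos|].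
           apply exp_le'. apply Rmult_le_compat_l; [lra|]. apply HZu.
        -- apply mgf; auto.
      * rewrite exp_pow', <- exp_plus. apply exp_le'. unfold lam. right. field. lra.
Qed.

Definition emi := excluded_middle_informative.

Lemma sumR_ge a b k n : (forall i, (i < n)%nat -> 1 - k * b i <= a i) ->
  INR n - k * sumR b n <= sumR a n.
Proof.
  induction n; intros H; cbn [sumR]. simpl; lra.
  rewrite S_INR. assert (IH := IHn (fun i Hi => H i ltac:(lia))). specialize (H n ltac:(lia)). lra.
Qed.

Lemma Series_sumR (f : nat -> nat -> R) n :
  (forall i, ex_series (f i)) ->
  Series (fun x => sumR (fun i => f i x) n) = sumR (fun i => Series (f i)) n.
Proof.
  intros H. induction n; simpl. apply Series_0.
  rewrite Series_plus. now rewrite IHn.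
  - clear IHn. induction n; simpl. exists 0. pose proof (is_series_finite (fun _ => 0) 0 (fun _ _ => eq_refl)) as H0; simpl in H0; exact H0.
    apply ex_plus; auto.
  - auto.
Qed.

Lemma unif_is_series n a : (1 <= n)%nat ->
  is_series (fun i => unif n i * a i) (sumR a n / INR n).
Proof.
  intros Hn.
  assert (E : forall m, (m <= n)%nat -> sumR (fun i => unif n i * a i) m = sumR a m / INR n).
  { induction m; cbn [sumR]; intros Hm. unfold Rdiv; ring. rewrite IHm by lia.
    unfold unif. replace (Nat.ltb m n) with true by (symmetry; apply Nat.ltb_lt; lia).
    field. apply not_0_INR; lia. }
  rewrite <- E by lia. apply is_series_finite. intros k Hk. unfold unif.
  replace (Nat.ltb k n) with false by (symmetry; apply Nat.ltb_ge; lia). ring.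
Qed.

Lemma sumR_const c n : sumR (fun _ => c) n = INR n * c.
Proof. induction n; cbn [sumR]. simpl; ring. rewrite IHn, S_INR. ring. Qed.

Lemma unif_dist n : (1 <= n)%nat -> isDist (unif n).
Proof.
  intros Hn. split.
  - intros x. unfold unif. destruct Nat.ltb. left; apply Rinv_0_lt_compat, lt_0_INR; lia. lra.
  - apply is_series_Reals. pose proof (unif_is_series n (fun _ => 1) Hn) as H.
    rewrite sumR_const in H. replace (INR n * 1 / INR n) with 1 in H by (field; apply not_0_INR; lia).
    eapply is_series_ext; [|exact H]. intros; simpl; ring.
Qed.

Definition lost (hist : list (nat -> R)) i x : Prop :=
  0 < nth i hist (fun _ => 0) x /\ ~ inA hist i x.

Lemma hatq_bounds hist xstar i x : isDist (nth i hist (fun _ => 0)) ->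
  0 <= hatq hist xstar i x <= 1 /\
  (~ lost hist i x -> nth i hist (fun _ => 0) x <= hatq hist xstar i x).
Proof.
  intros Hq. set (qi := nth i hist (fun _ => 0)) in *. pose proof Hq as [Hq0 _].
  set (g := fun y => if excluded_middle_informative (inA hist i y) then 0 else qi y).
  assert (Hg : forall y, 0 <= g y <= qi y).
  { intros y. unfold g. destruct excluded_middle_informative; split; auto; lra. }
  assert (Hgex : ex_series g).
  { apply (ex_le_R _ qi). intros y. rewrite Rabs_right by (apply Rle_ge, Hg). apply Hg.
    now apply dist_ex. }
  assert (HS0 : series g = Series g) by (now apply series_Series).
  assert (HS0p : 0 <= Series g).
  { rewrite <- Series_0. apply Series_le; auto. intros; split; [lra|apply Hg]. }
  set (c := if excluded_middle_informative (inA hist i x) then qi x else 0).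
  assert (Hc : 0 <= c <= qi x) by (unfold c; destruct excluded_middle_informative; split; auto; lra).
  assert (Hsum : c + Series g <= 1).
  { rewrite <- (dist_Series qi Hq).
    rewrite <- (Series_single x c) at 1. rewrite <- Series_plus.
    - apply Series_le'.
      + apply ex_plus; auto. apply (ex_le_R _ qi); [|now apply dist_ex].
        intros n. destruct (Nat.eq_dec n x); subst; rewrite ?Rabs_R0; auto.
        rewrite Rabs_right; lra.
      + now apply dist_ex.
      + intros y. destruct (Nat.eq_dec y x).
        * subst y. unfold g, c. destruct excluded_middle_informative; lra.
        * pose proof (Hg y); lra.
    - apply (ex_le_R _ qi); [|now apply dist_ex].
      intros n. destruct (Nat.eq_dec n x); subst; rewrite ?Rabs_R0; auto.
      rewrite Rabs_right; lra.
    - auto. }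
  assert (Hqx : qi x <= 1) by (apply dist_le1; auto).
  unfold hatq. fold qi. fold g. fold c. rewrite HS0.
  split; [split|].
  - destruct Nat.eq_dec; lra.
  - destruct Nat.eq_dec.
    + lra.
    + unfold c; destruct excluded_middle_informative; lra.
  - intros Hl. unfold c. destruct excluded_middle_informative.
    + destruct Nat.eq_dec; lra.
    + assert (qi x <= 0).
      { apply Rnot_lt_le. intros Hpos. apply Hl. split; auto. }
      destruct Nat.eq_dec; lra.
Qed.

Lemma ind_bounds P : 0 <= ind P <= 1.
Proof. unfold ind; destruct excluded_middle_informative; lra. Qed.

Lemma Loss_eq p L M q : isDist p -> (forall x, 0 <= q x <= 1) ->
  (forall t, 0 <= t <= 1 -> 0 <= L t <= M) ->
  Loss p L q = Series (fun x => p x * L (q x)) /\ 0 <= Loss p L q <= M.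
Proof.
  intros Hp Hq HL.
  assert (H : Loss p L q = Series (fun x => p x * L (q x))).
  { unfold Loss. apply series_Series. apply (ex_bnd p _ M); auto.
    intros x. destruct (HL (q x) (Hq x)). rewrite Rabs_right; lra. }
  split; auto. rewrite H. apply Series_dist_bound; auto.
Qed.

Lemma dist_unit q : isDist q -> forall x, 0 <= q x <= 1.
Proof. intros Hq x. now apply dist_le1. Qed.

Lemma Loss_hatq p L M hist xstar i : isDist p -> isDist (nth i hist (fun _ => 0)) ->
  (forall t, 0 <= t <= 1 -> 0 <= L t <= M) ->
  (forall s t, 0 <= s <= t -> t <= 1 -> L t <= L s) ->
  Loss p L (hatq hist xstar i) <=
  Loss p L (nth i hist (fun _ => 0)) + M * Series (fun x => p x * ind (lost hist i x)).
Proof.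
  intros Hp Hq HL Hmon. set (qi := nth i hist (fun _ => 0)) in *.
  assert (Hh : forall x, 0 <= hatq hist xstar i x <= 1) by (intros; apply hatq_bounds; auto).
  destruct (Loss_eq p L M _ Hp Hh HL) as [E1 _].
  destruct (Loss_eq p L M _ Hp (dist_unit qi Hq) HL) as [E2 _].
  rewrite E1, E2. pose proof Hp as [Hp0 _].
  rewrite <- Series_scal_l, <- Series_plus.
  - apply Series_le'.
    + apply (ex_bnd p _ M); auto. intros x. destruct (HL _ (Hh x)). rewrite Rabs_right; lra.
    + apply ex_plus. apply (ex_bnd p _ M); auto. intros x. destruct (HL _ (dist_unit qi Hq x)). rewrite Rabs_right; lra.
      apply ex_scal. apply (ex_bnd p _ 1); auto. intros x. pose proof (ind_bounds (lost hist i x)). rewrite Rabs_right; lra.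
    + intros x. destruct (hatq_bounds hist xstar i x Hq) as [Hb Hnl].
      pose proof (HL _ Hb). pose proof (HL _ (dist_unit qi Hq x)). specialize (Hp0 x).
      unfold ind. destruct excluded_middle_informative as [Hl|Hl].
      * nra.
      * specialize (Hnl Hl). pose proof (Hmon (qi x) (hatq hist xstar i x) ltac:(split; [apply (dist_unit qi Hq)|auto]) ltac:(apply Hb)).
        nra.
  - apply (ex_bnd p _ M); auto. intros x. destruct (HL _ (dist_unit qi Hq x)). rewrite Rabs_right; lra.
  - apply ex_scal. apply (ex_bnd p _ 1); auto. intros x. pose proof (ind_bounds (lost hist i x)). rewrite Rabs_right; lra.
Qed.

Lemma sumR_zero f n : (forall i, (i < n)%nat -> f i = 0) -> sumR f n = 0.
Proof. induction n; cbn [sumR]; intros H; auto. rewrite IHn by (intros; apply H; lia). rewrite H by lia. ring. Qed.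

Lemma lost_disjoint hist x n : (n <= length hist)%nat ->
  sumR (fun i => ind (lost hist i x)) n <= 1.
Proof.
  induction n; cbn [sumR]; intros Hn. lra.
  unfold ind at 2. destruct excluded_middle_informative as [Hl|Hl].
  - rewrite sumR_zero. lra. intros i Hi. unfold ind. destruct excluded_middle_informative as [Hli|]; auto.
    exfalso. destruct Hli as [_ HA]. apply HA. exists n. split; [lia|]. apply Hl.
  - specialize (IHn ltac:(lia)). lra.
Qed.

Lemma sumR_nonneg f n : (forall i, 0 <= f i) -> 0 <= sumR f n.
Proof. intros H; induction n; cbn [sumR]; [lra|]. specialize (H n); lra. Qed.

Lemma sumR_scal c f n : sumR (fun i => c * f i) n = c * sumR f n.
Proof. induction n; cbn [sumR]. ring. rewrite IHn. ring. Qed.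

Lemma lost_sum p hist : isDist p ->
  sumR (fun i => Series (fun x => p x * ind (lost hist i x))) (length hist) <= 1.
Proof.
  intros Hp. pose proof Hp as [Hp0 _].
  assert (Hb : forall x, 0 <= sumR (fun i => p x * ind (lost hist i x)) (length hist) <= p x).
  { intros x. rewrite sumR_scal. pose proof (lost_disjoint hist x (length hist) (le_n _)).
    pose proof (sumR_nonneg (fun i => ind (lost hist i x)) (length hist) (fun i => proj1 (ind_bounds _))).
    specialize (Hp0 x). split; nra. }
  rewrite <- Series_sumR.
  - rewrite <- (dist_Series p Hp). apply Series_le'.
    + apply (ex_le_R _ p). 2: now apply dist_ex. intros x.
      specialize (Hb x). rewrite Rabs_right; lra.
    + now apply dist_ex.
    + apply Hb.
  - intros i. apply (ex_bnd p _ 1); auto. intros x. pose proof (ind_bounds (lost hist i x)). rewrite Rabs_right; lra.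
Qed.

Lemma LB_ret_ind {A} (E : A -> Prop) r : LB E (Ret r) (ind (E r)).
Proof. unfold ind. destruct excluded_middle_informative. now apply LB_ret1. apply LB_ret0. Qed.

Lemma final_stage p L M qstar eps1 hist xstar Rn :
  isDist p -> (forall t, 0 <= t <= 1 -> 0 <= L t <= M) ->
  (forall s t, 0 <= s <= t -> t <= 1 -> L t <= L s) ->
  (forall h, In h hist -> isDist h /\ Loss p L h <= Loss p L qstar + eps1 / 2) ->
  length hist = Rn -> (1 <= Rn)%nat -> 32 * M / eps1 <= INR Rn -> 0 < eps1 -> 0 < M ->
  LB (fun q => Loss p L q <= Loss p L qstar + eps1)
     (Draw (unif Rn) (fun i => Ret (hatq hist xstar i))) (15/16).
Proof.
  intros Hp HL Hmon Hh Hlen HRn HR He HM.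
  set (E := fun q => Loss p L q <= Loss p L qstar + eps1).
  set (a := fun i => ind (E (hatq hist xstar i))).
  eapply LB_mono.
  - apply (LB_draw E (unif Rn) _ a). now apply unif_dist.
    intros i. apply LB_ret_ind. intros i. apply ind_bounds.
  - rewrite (is_series_unique _ _ (unif_is_series Rn a HRn)).
    set (b := fun i => Series (fun x => p x * ind (lost hist i x))).
    set (k := 2 * M / eps1).
    assert (Hb : sumR b Rn <= 1) by (rewrite <- Hlen; apply lost_sum; auto).
    assert (Hb0 : forall i, 0 <= b i).
    { intros i. unfold b. apply (Series_dist_bound p _ 0 1); auto. intros; apply ind_bounds. }
    assert (Hk : 0 < k) by (unfold k; apply Rdiv_lt_0_compat; lra).
    assert (Ha : forall i, (i < Rn)%nat -> 1 - k * b i <= a i).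
    { intros i Hi. assert (Hin : In (nth i hist (fun _ => 0)) hist) by (apply nth_In; lia).
      destruct (Hh _ Hin) as [Hqi HLq].
      pose proof (Loss_hatq p L M hist xstar i Hp Hqi HL Hmon) as HLh. fold (b i) in HLh.
      pose proof (Hb0 i).
      destruct (Rle_lt_dec (M * b i) (eps1 / 2)).
      - unfold a, ind. destruct excluded_middle_informative as [|n]. nra.
        exfalso. apply n. unfold E. lra.
      - assert (1 < k * b i).
        { unfold k. apply Rmult_lt_reg_r with eps1; auto. unfold Rdiv.
          replace (2 * M * / eps1 * b i * eps1) with (2 * (M * b i)) by (field; lra). lra. }
        unfold a. pose proof (ind_bounds (E (hatq hist xstar i))). lra. }
    pose proof (sumR_ge a b k Rn Ha).
    assert (Hkb : k <= INR Rn / 16).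
    { unfold k. apply Rmult_le_reg_r with 16; [lra|].
      replace (INR Rn / 16 * 16) with (INR Rn) by field.
      replace (2 * M / eps1 * 16) with (32 * M / eps1) by (field; lra). auto. }
    pose proof (lt_0_INR Rn ltac:(lia)).
    apply Rmult_le_reg_r with (INR Rn); auto.
    replace (sumR a Rn / INR Rn * INR Rn) with (sumR a Rn) by (field; lra).
    assert (k * sumR b Rn <= k) by (rewrite <- (Rmult_1_r k) at 2; apply Rmult_le_compat_l; lra).
    lra.
Qed.

Lemma rounds_LB p Inv L M Qs orc XP qstar eps1 xstar Rn T :
  isDist p -> (forall t, 0 <= t <= 1 -> 0 <= L t <= M) ->
  (forall s t, 0 <= s <= t -> t <= 1 -> L t <= L s) ->
  (forall q, In q Qs -> isDist q) -> is_oracle L Qs orc -> In qstar Qs ->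
  (forall x, 0 < qstar x -> Inv x = false) ->
  (forall q, In q Qs -> emp_loss L XP q <= emp_loss L XP qstar ->
     Loss p L q <= Loss p L qstar + eps1 / 2) ->
  (1 <= Rn)%nat -> 32 * M / eps1 <= INR Rn -> 0 < eps1 -> 0 < M ->
  forall fuel XN hist, (forall x, In x XN -> Inv x = true) ->
  (forall h, In h hist -> isDist h /\ Loss p L h <= Loss p L qstar + eps1 / 2) ->
  (length hist + fuel = Rn)%nat ->
  LB (fun q => Loss p L q <= Loss p L qstar + eps1)
     (rounds Inv orc XP xstar Rn T fuel XN hist) (15/16).
Proof.
  intros Hp HL Hmon HQ Horc Hqs HqsI HG HRn HR He HM.
  induction fuel; intros XN hist HXN Hh Hlen; simpl.
  - apply final_stage with M; auto. lia.
  - assert (Hfeas : feasible Qs XN qstar).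
    { split; auto. intros x Hx Hpos. specialize (HXN x Hx). rewrite HqsI in HXN; [discriminate|auto]. }
    destruct Horc as [Horc _].
    destruct (Horc XP XN (ex_intro _ qstar Hfeas)) as [[Hin _] Hopt].
    specialize (Hopt qstar Hfeas).
    set (q := orc XP XN) in *.
    assert (Hq : isDist q /\ Loss p L q <= Loss p L qstar + eps1 / 2) by (split; auto).
    apply LB_draws_const; [apply Hq| |lra].
    intros s. destruct forallb.
    + eapply LB_mono. apply LB_ret1. destruct Hq; lra. lra.
    + apply IHfuel.
      * intros x Hx. apply in_app_or in Hx. destruct Hx; auto. apply filter_In in H. apply H.
      * intros h Hh'. apply in_app_or in Hh'. destruct Hh' as [|[|[]]]; auto. subst; auto.
      * rewrite length_app. simpl. lia.
Qed.

Lemma nceil_ge x : x <= INR (nceil x).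
Proof.
  unfold nceil. destruct (base_Int_part (- x)) as [H1 _].
  set (z := (- Int_part (- x))%Z).
  assert (Hz : x <= IZR z) by (unfold z; rewrite opp_IZR; lra).
  destruct (ZArith_dec.Z_le_gt_dec 0 z).
  - rewrite INR_IZR_INZ, Z2Nat.id; auto.
  - assert (IZR z < 0) by (apply IZR_lt; lia). pose proof (pos_INR (Z.to_nat z)). lra.
Qed.

Lemma InvQ_zero Inv q : isDist q -> InvQ Inv q = 0 -> forall x, 0 < q x -> Inv x = false.
Proof.
  intros Hq H x Hx. pose proof Hq as [Hq0 _].
  assert (Hex : ex_series (fun y => q y * indic (Inv y))).
  { apply (ex_bnd q _ 1); auto. intros y. unfold indic. destruct (Inv y); rewrite ?Rabs_R1, ?Rabs_R0; lra. }
  unfold InvQ in H. rewrite series_Series in H by auto.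
  destruct (Inv x) eqn:E; auto. exfalso.
  assert (T : q x * indic (Inv x) <= Series (fun y => q y * indic (Inv y))).
  { apply (term_le_Series (fun y => q y * indic (Inv y)) x); auto.
    intros n. specialize (Hq0 n). unfold indic; destruct (Inv n); lra. }
  rewrite H, E in T. unfold indic in T. lra.
Qed.

Lemma Series_center p g c B : isDist p -> (forall x, Rabs (g x) <= B) ->
  Series (fun x => p x * (c - g x)) = c - Series (fun x => p x * g x).
Proof.
  intros Hp Hg. rewrite (Series_ext _ (fun x => p x * c - p x * g x)) by (intros; ring).
  rewrite Series_minus. rewrite Series_dist_const; auto.
  - apply (ex_bnd p (fun _ => c) (Rabs c)); auto. intros; lra.
  - apply (ex_bnd p _ B); auto.
Qed.

Lemma sumL_center c g s : sumL (fun x => c - g x) s = INR (length s) * c - sumL g s.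
Proof. induction s. simpl; ring. unfold sumL in *. cbn [fold_right length]. rewrite IHs, S_INR. ring. Qed.

Lemma fold_sum_bound {T} (h : T -> R) l : (forall q, 0 <= h q <= 1) ->
  0 <= fold_right (fun q acc => h q + acc) 0 l <= INR (length l).
Proof.
  intros H. induction l. simpl; lra. cbn [fold_right length]. rewrite S_INR. specialize (H a). lra.
Qed.

Lemma fold_sum_mem {T} (h : T -> R) l q : (forall q, 0 <= h q) -> In q l ->
  h q <= fold_right (fun q acc => h q + acc) 0 l.
Proof.
  intros H Hin. induction l; destruct Hin; cbn [fold_right].
  - subst. assert (0 <= fold_right (fun q acc => h q + acc) 0 l).
    { clear IHl. induction l as [|b l2 IH2]; cbn [fold_right]; [lra|]. specialize (H b); lra. }
    lra.
  - specialize (IHl H0). specialize (H a). lra.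
Qed.

Lemma fold_sum_le {T} (h : T -> R) l b : (forall q, In q l -> h q <= b) ->
  fold_right (fun q acc => h q + acc) 0 l <= INR (length l) * b.
Proof.
  intros H. induction l. simpl; lra. cbn [fold_right length]. rewrite S_INR.
  assert (h a <= b) by (apply H; left; auto).
  assert (fold_right (fun q acc => h q + acc) 0 l <= INR (length l) * b) by (apply IHl; intros; apply H; right; auto).
  lra.
Qed.

Lemma Eds_sumlist {T} d n (h : T -> list nat -> R) l : isDist d ->
  (forall q s, 0 <= h q s <= 1) ->
  Eds d n (fun s => fold_right (fun q acc => h q s + acc) 0 l) =
  fold_right (fun q acc => Eds d n (h q) + acc) 0 l.
Proof.
  intros Hd H. induction l; cbn [fold_right].
  - apply Eds_const; auto.
  - rewrite (Eds_plus d n (h a) _ 1 (INR (length l))); auto.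
    + rewrite IHl; auto.
    + intros s _. specialize (H a s). rewrite Rabs_right; lra.
    + intros s _. pose proof (fold_sum_bound (fun q => h q s) l (fun q => H q s)).
      rewrite Rabs_right; lra.
Qed.

Lemma rounds_LB0 (E : (nat -> R) -> Prop) Inv L Qs orc XP qstar xstar Rn T :
  (forall q, In q Qs -> isDist q) -> is_oracle L Qs orc -> In qstar Qs ->
  (forall x, 0 < qstar x -> Inv x = false) -> (1 <= Rn)%nat ->
  forall fuel XN hist, (forall x, In x XN -> Inv x = true) ->
  LB E (rounds Inv orc XP xstar Rn T fuel XN hist) 0.
Proof.
  intros HQ Horc Hqs HqsI HRn.
  induction fuel; intros XN hist HXN; simpl.
  - apply LB_draw_const. now apply unif_dist. intros; apply LB_ret0. lra.
  - assert (Hfeas : feasible Qs XN qstar).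
    { split; auto. intros x Hx Hpos. specialize (HXN x Hx). rewrite HqsI in HXN; [discriminate|auto]. }
    destruct Horc as [Horc' _].
    destruct (Horc' XP XN (ex_intro _ qstar Hfeas)) as [[Hin _] _].
    apply LB_draws_const; [auto| |lra].
    intros s. destruct forallb.
    + apply LB_ret0.
    + apply IHfuel. intros x Hx. apply in_app_or in Hx. destruct Hx; auto. apply filter_In in H. apply H.
Qed.

Lemma bnd_between n f a b : (forall s, a <= f s <= b) -> bndB n f (Rabs a + Rabs b).
Proof.
  intros H s _. specialize (H s). unfold Rabs; repeat destruct Rcase_abs; lra.
Qed.

Lemma Series_center2 p g c B : isDist p -> (forall x, Rabs (g x) <= B) ->
  Series (fun x => p x * (g x - c)) = Series (fun x => p x * g x) - c.
Proof.
  intros Hp Hg. rewrite (Series_ext _ (fun x => - (p x * (c - g x)))) by (intros; ring).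
  rewrite Series_opp, (Series_center p g c B) by auto. ring.
Qed.

Lemma sumL_center2 c g s : sumL (fun x => g x - c) s = sumL g s - INR (length s) * c.
Proof. induction s. simpl; ring. unfold sumL in *. cbn [fold_right length]. rewrite IHs, S_INR. ring. Qed.

Lemma neg_mul a c S t : 0 < a -> ~ (c <= / a * S + t) -> a * t < a * c - S.
Proof.
  intros Ha H. apply Rnot_le_lt in H.
  assert (H2 : a * (/ a * S + t) < a * c) by (apply Rmult_lt_compat_l; auto).
  rewrite Rmult_plus_distr_l, <- Rmult_assoc, Rinv_r in H2 by lra. lra.
Qed.

Lemma neg_mul2 a c S t : 0 < a -> ~ (/ a * S <= c + t) -> a * t < S - a * c.
Proof.
  intros Ha H. apply Rnot_le_lt in H.
  assert (H2 : a * (c + t) < a * (/ a * S)) by (apply Rmult_lt_compat_l; auto).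
  rewrite <- Rmult_assoc, Rinv_r in H2 by lra. lra.
Qed.

Lemma final_arith N beta : 2 <= N -> 0 <= beta -> beta <= / N ^ 8 ->
  7/8 <= 15/16 + -15/16 * (N * beta) + -15/16 * beta.
Proof.
  intros HN Hb Hb2.
  assert (H7 : 2 ^ 7 <= N ^ 7) by (apply pow_incr; lra).
  assert (HN8 : 64 * (N + 1) <= N ^ 8).
  { replace (N ^ 8) with (N ^ 7 * N) by ring. nra. }
  assert (Hp : 0 < N ^ 8) by lra.
  assert (Hb3 : beta * N ^ 8 <= 1).
  { apply Rmult_le_reg_r with (/ N ^ 8). apply Rinv_0_lt_compat; lra.
    rewrite Rmult_assoc, Rinv_r, Rmult_1_l, Rmult_1_r by lra. lra. }
  assert (beta * (64 * (N + 1)) <= 1) by nra.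
  nra.
Qed.

Theorem lemma2 :
  exists C1 C2 : R, 0 < C1 /\ 0 < C2 /\
  forall (p : nat -> R) (Inv : nat -> bool) (M : R) (L : R -> R)
         (Qs : list (nat -> R)) (orc : list nat -> list nat -> (nat -> R))
         (xstar : nat) (qstar : nat -> R) (eps1 eps2 : R),
    isDist p ->
    (forall x, 0 < p x -> Inv x = false) ->
    0 < M ->
    (forall t, 0 <= t <= 1 -> 0 <= L t <= M) ->
    (forall s t, 0 <= s <= t -> t <= 1 -> L t <= L s) ->
    (forall q, In q Qs -> isDist q) ->
    NoDup Qs ->
    (2 <= length Qs)%nat ->
    (exists q, In q Qs /\ InvQ Inv q = 0) ->
    In qstar Qs -> InvQ Inv qstar = 0 ->
    (forall q, In q Qs -> InvQ Inv q = 0 -> Loss p L qstar <= Loss p L q) ->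
    is_oracle L Qs orc ->
    Inv xstar = false ->
    0 < eps1 -> 0 < eps2 ->
    let Rn := nceil (32 * M / eps1) in
    let P := nceil (C1 * M ^ 2 / eps1 ^ 2 * ln (INR (length Qs))) in
    let T := nceil (C2 * INR Rn / eps2 * ln (INR (length Qs))) in
    exists v,
      PrEv (fun qhat => Loss p L qhat <= Loss p L qstar + eps1)
           (algorithm1 p Inv orc xstar P Rn T) v
      /\ 7 / 8 <= v.
Proof.
  exists 1024, 1. split; [lra|]. split; [lra|].
  intros p Inv M L Qs orc xstar qstar eps1 eps2 Hp HpI HM HL Hmon HQ HND Hlen Hex Hqs HqsI Hopt Horc Hxs He1 He2 Rn P T.
  set (E := fun qhat => Loss p L qhat <= Loss p L qstar + eps1).
  set (N := INR (length Qs)) in *.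
  assert (HN2 : 2 <= N) by (unfold N; apply (le_INR 2) in Hlen; simpl in Hlen; lra).
  assert (Hln : 0 < ln N) by (rewrite <- ln_1; apply ln_increasing; lra).
  pose proof (nceil_ge (32 * M / eps1)) as HRn. fold Rn in HRn.
  assert (HRpos : 0 < 32 * M / eps1) by (apply Rdiv_lt_0_compat; lra).
  assert (HRn1 : (1 <= Rn)%nat) by (apply INR_lt; simpl; lra).
  pose proof (nceil_ge (1024 * M ^ 2 / eps1 ^ 2 * ln N)) as HP. fold P in HP.
  assert (HPpos0 : 0 < 1024 * M ^ 2 / eps1 ^ 2 * ln N).
  { apply Rmult_lt_0_compat; auto. apply Rdiv_lt_0_compat; nra. }
  assert (HPpos : 0 < INR P) by lra.
  pose proof (InvQ_zero Inv qstar (HQ _ Hqs) HqsI) as HqsI'.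
  set (t := eps1 / 4).
  set (G := fun s : list nat => (forall q, In q Qs -> Loss p L q <= emp_loss L s q + t) /\
                     emp_loss L s qstar <= Loss p L qstar + t).
  assert (HLB : LB E (algorithm1 p Inv orc xstar P Rn T) (Eds p P (fun s => 15/16 * ind (G s)))).
  { unfold algorithm1. apply LB_draws; auto.
    - intros s Hs. unfold ind; destruct excluded_middle_informative as [Hg|Hg].
      + rewrite Rmult_1_r. apply (rounds_LB p Inv L M Qs orc s qstar eps1 xstar Rn T); auto.
        all: try (intros ? []; fail). all: try (simpl; lia).
        intros q Hq Hle. destruct Hg as [Hg1 Hg2]. specialize (Hg1 q Hq). unfold t in *; lra.
      + rewrite Rmult_0_r. apply (rounds_LB0 E Inv L Qs orc s qstar xstar Rn T); auto.
        all: try (intros ? []; fail).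
    - intros s _. pose proof (ind_bounds (G s)). lra. }
  destruct HLB as [v [Hv [Hle _]]]. exists v. split; [exact Hv|].
  apply Rle_trans with (Eds p P (fun s => 15/16 * ind (G s))); auto.
  set (Zq := fun (q : nat -> R) x => Loss p L q - L (q x)).
  set (Zs := fun x => L (qstar x) - Loss p L qstar).
  set (hq := fun q s => ind (INR P * t < sumL (Zq q) s)).
  set (hs := fun s => ind (INR P * t < sumL Zs s)).
  set (SL := fun s => fold_right (fun q acc => hq q s + acc) 0 Qs).
  assert (HSL : forall s, 0 <= SL s <= N).
  { intros s. apply fold_sum_bound. intros; apply ind_bounds. }
  set (beta := exp (- INR P * t ^ 2 / (8 * M ^ 2))).
  assert (HLq : forall q, In q Qs -> 0 <= Loss p L q <= M /\
             Series (fun x => p x * L (q x)) = Loss p L q).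
  { intros q Hq. destruct (Loss_eq p L M q Hp (dist_unit q (HQ q Hq)) HL) as [E1 E2]. auto. }
  assert (HLx : forall q, In q Qs -> forall x, 0 <= L (q x) <= M).
  { intros q Hq x. apply HL. apply dist_unit; auto. }
  assert (Hbq : forall q, In q Qs -> Eds p P (hq q) <= beta).
  { intros q Hq. apply (chernoff p (Zq q) M t P); auto.
    - intros x. unfold Zq. destruct (HLq q Hq) as [[] _]. pose proof (HLx q Hq x).
      apply Rabs_le; lra.
    - unfold t; lra.
    - unfold Zq. rewrite (Series_center p (fun x => L (q x)) _ M); auto.
      + destruct (HLq q Hq) as [_ ->]. lra.
      + intros x. pose proof (HLx q Hq x). rewrite Rabs_right; lra. }
  assert (Hbs : Eds p P hs <= beta).
  { apply (chernoff p Zs M t P); auto.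
    - intros x. unfold Zs. destruct (HLq qstar Hqs) as [[] _]. pose proof (HLx qstar Hqs x).
      apply Rabs_le; lra.
    - unfold t; lra.
    - unfold Zs. rewrite (Series_center2 p (fun x => L (qstar x)) _ M); auto.
      + destruct (HLq qstar Hqs) as [_ ->]. lra.
      + intros x. pose proof (HLx qstar Hqs x). rewrite Rabs_right; lra. }
  assert (Hbeta : beta <= / N ^ 8).
  { unfold beta. rewrite <- (exp_ln (N ^ 8)) by (apply pow_lt; lra).
    rewrite <- exp_Ropp. apply exp_le'. rewrite ln_pow by lra.
    assert (H1 : 1024 * M ^ 2 * ln N <= INR P * eps1 ^ 2).
    { apply Rmult_le_compat_r with (r := eps1 ^ 2) in HP; [|nra].
      replace (1024 * M ^ 2 / eps1 ^ 2 * ln N * eps1 ^ 2) with (1024 * M ^ 2 * ln N) in HP by (field; lra).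
      lra. }
    unfold t. simpl INR.
    apply Rmult_le_reg_r with (128 * M ^ 2). nra.
    replace (- INR P * (eps1 / 4) ^ 2 / (8 * M ^ 2) * (128 * M ^ 2)) with (- (INR P * eps1 ^ 2)) by (field; lra).
    nra. }
  assert (Hb0 : 0 <= beta) by (left; apply exp_pos).
  apply Rle_trans with (Eds p P (fun s => (15/16 + -15/16 * SL s) + -15/16 * hs s)).
  2:{ apply (Eds_le p P _ _ (Rabs (-15/16 * N - 15/16) + Rabs (15/16)) 1); auto.
      - apply bnd_between. intros s. pose proof (HSL s). pose proof (ind_bounds (INR P * t < sumL Zs s)).
        unfold hs. lra.
      - intros s _. pose proof (ind_bounds (G s)). rewrite Rabs_right; lra.
      - intros s Hs. pose proof (HSL s). pose proof (ind_bounds (INR P * t < sumL Zs s)) as Hhs.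
        fold (hs s) in Hhs.
        unfold ind at 1. destruct excluded_middle_informative as [Hg|Hg]. lra.
        assert (Hfail : (exists q, In q Qs /\ hq q s = 1) \/ hs s = 1).
        { destruct (classic (forall q, In q Qs -> Loss p L q <= emp_loss L s q + t)) as [H1|H1].
          - right. assert (H2 : ~ (emp_loss L s qstar <= Loss p L qstar + t)) by (intros H2; apply Hg; split; auto).
            unfold hs, ind. destruct excluded_middle_informative as [|n0]; auto. exfalso; apply n0.
            unfold Zs. rewrite sumL_center2, Hs. apply neg_mul2; [lra|]. unfold emp_loss in H2. rewrite Hs in H2. exact H2.
          - left. apply not_all_ex_not in H1. destruct H1 as [q H1].
            exists q. split. { destruct (classic (In q Qs)); auto. exfalso; apply H1; intros; contradiction. }
            assert (H3 : ~ (Loss p L q <= emp_loss L s q + t)) by (intros H3; apply H1; auto).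
            unfold hq, ind. destruct excluded_middle_informative as [|n0]; auto. exfalso; apply n0.
            unfold Zq. rewrite sumL_center, Hs. apply neg_mul; [lra|]. unfold emp_loss in H3. rewrite Hs in H3. exact H3. }
        destruct Hfail as [[q [Hq Hq1]]|Hs1].
        + assert (hq q s <= SL s) by (apply (fold_sum_mem (fun q => hq q s)); auto; intros; apply ind_bounds).
          lra.
        + lra. }
  rewrite (Eds_plus p P _ _ (Rabs (-15/16 * N) + Rabs (15/16)) (Rabs (-15/16) + Rabs 0)); auto.
  2:{ apply bnd_between. intros s. pose proof (HSL s). lra. }
  2:{ apply bnd_between. intros s. pose proof (ind_bounds (INR P * t < sumL Zs s)). unfold hs. lra. }
  rewrite (Eds_plus p P _ _ (Rabs (15/16) + Rabs (15/16)) (Rabs (-15/16 * N) + Rabs 0)); auto.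
  2:{ apply bnd_between. intros s. lra. }
  2:{ apply bnd_between. intros s. pose proof (HSL s). lra. }
  rewrite Eds_const, !Eds_scal by auto.
  unfold SL. rewrite (Eds_sumlist p P hq Qs Hp) by (intros; apply ind_bounds).
  pose proof (fold_sum_le (fun q => Eds p P (hq q)) Qs beta Hbq) as Hsum. fold N in Hsum.
  pose proof (final_arith N beta HN2 Hb0 Hbeta).
  nra.
Qed.
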